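(* Let $f,g:\mathbb{R}^2\to\mathbb{R}$ be Lipschitz continuous, let $(J,W)$ be a graphon and let $A\subseteq J$ be a measurable set of positive measure. Suppose that all the vertices in $A$ are twins. Then the cluster subspace $\mathcal C(A)$ is dynamically invariant for the graphon dynamical system $\mathcal D(J,W)$.
   Context: A graphon $(J,W)$ consists of a probability space $J=(\Omega,\mathcal A,\mu)$ and a symmetric measurable $W:\Omega\times\Omega\to[0,1]$. The graphon dynamical system $\mathcal D(J,W)$ is the flow on $L^1(J)$ given by $\dot u_x=f\big(u_x,\int_J W(x,y)g(u_x,u_y)\,d\mu(y)\big)$, where for each $t$ the equation holds for almost every $x$. The elements of a measurable set $A$ are twins if the function $y\mapsto W(x,y)$ (as an element of $L^1$, i.e. up to null sets) does not depend on $x\in A$. The cluster subspace $\mathcal C(A)$ is the set of $u\in L^1(J)$ that are constant on $A$ up to a null set. A subset is dynamically invariant if every trajectory starting in it stays in it for all $t\in\mathbb{R}$. *)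

(* Defs.v *)
From HB Require Import structures.
From mathcomp Require Import all_boot all_order all_algebra.
From mathcomp Require Import all_classical all_reals all_analysis.
Set Implicit Arguments. Unset Strict Implicit. Unset Printing Implicit Defensive.
Import Order.TTheory GRing.Theory Num.Theory.
Import numFieldNormedType.Exports.
Local Open Scope classical_set_scope.
Local Open Scope ring_scope.

(* Lipschitz continuity of a function R^2 -> R (curried), w.r.t. the l^1 norm
   on R^2 (all norms on R^2 are equivalent). *)
Definition lipschitz2 {R : realType} (f : R -> R -> R) : Prop :=
  exists L : R, forall a b a' b',
    `|f a b - f a' b'| <= L * (`|a - a'| + `|b - b'|).

(* A graphon (J, W): J = (T, P) a probability space, W symmetric measurable
   with values in [0,1]. *)
Definition is_graphon {d} {T : measurableType d} {R : realType}
  (W : T * T -> R) : Prop :=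
  measurable_fun setT W /\
  (forall x y, W (x, y) = W (y, x)) /\
  (forall z, 0 <= W z <= 1).

Definition graphon_rhs {d} {T : measurableType d} {R : realType}
  (P : probability T R) (W : T * T -> R) (f g : R -> R -> R)
  (u : T -> R) (x : T) : R :=
  f (u x) (Rintegral P setT (fun y => W (x, y) * g (u x) (u y))).

(* A trajectory of D(J,W): a map u : R -> L^1(J) (represented by functions),
   differentiable as an L^1-valued map, whose derivative at every time t
   equals the right-hand side (as an element of L^1, i.e. for a.e. x). *)
Definition trajectory {d} {T : measurableType d} {R : realType}
  (P : probability T R) (W : T * T -> R) (f g : R -> R -> R)
  (u : R -> T -> R) : Prop :=
  (forall t, P.-integrable setT (EFin \o u t)) /\
  (forall t,
    (fun h : R => (\int[P]_x
        ((`| (u (t + h) x - u t x) / h - graphon_rhs P W f g (u t) x |)%R)%:E)%E)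
      @ (0 : R)^' --> 0%E).

(* Elements of A are twins: y |-> W(x,y) is the same element of L^1 for
   all x in A. *)
Definition twins {d} {T : measurableType d} {R : realType}
  (P : probability T R) (W : T * T -> R) (A : set T) : Prop :=
  forall x x', A x -> A x' -> {ae P, forall y, W (x, y) = W (x', y)}.

Definition cluster_subspace {d} {T : measurableType d} {R : realType}
  (P : probability T R) (A : set T) (v : T -> R) : Prop :=
  P.-integrable setT (EFin \o v) /\
  exists c : R, {ae P, forall x, A x -> v x = c}.

Definition dyn_invariant {d} {T : measurableType d} {R : realType}
  (P : probability T R) (W : T * T -> R) (f g : R -> R -> R)
  (S : (T -> R) -> Prop) : Prop :=
  forall u : R -> T -> R, trajectory P W f g u ->
    S (u 0) -> forall t, S (u t).

(* Main.v *)
Require Import Defs.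
From HB Require Import structures.
From mathcomp Require Import all_boot all_order all_algebra.
From mathcomp Require Import all_classical all_reals all_analysis.
From mathcomp Require Import ring lra measurable_realfun.
Set Implicit Arguments. Unset Strict Implicit. Unset Printing Implicit Defensive.
Import Order.TTheory GRing.Theory Num.Theory.
Import numFieldNormedType.Exports.
Local Open Scope classical_set_scope.
Local Open Scope ring_scope.
Section Gron.
Context {R : realType}.

Definition loc_est (D : R -> R) (C : R) :=
  forall t eta, 0 < eta -> exists2 del, 0 < del &
    forall h, h != 0 -> `|h| < del -> `|D (t + h) - D t| <= `|h| * (C * D t + eta).

Lemma gron_step (D : R -> R) C : 0 <= C -> (forall t, 0 <= D t) -> loc_est D C ->
  forall t0, D t0 = 0 -> forall s, 0 <= s <= (2 * C + 2)^-1 -> D (t0 + s) = 0.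
Proof.
move=> C0 D0 est t0 Dt0.
set a := 2 * C + 2. set tau := a^-1.
have a0 : 0 < a by rewrite /a; lra.
have tau0 : 0 < tau by rewrite /tau invr_gt0.
have atau : a * tau = 1 by rewrite /tau divff // gt_eqF.
suff H : forall eps, 0 < eps -> forall s, 0 <= s <= tau -> D (t0 + s) <= eps * (1 + a * s).
  move=> s /andP[s0 stau]; apply/eqP; rewrite eq_le D0 andbT.
  apply/ler_addgt0Pr => e e0; rewrite add0r.
  have := H (e / 2) (ltac:(lra)) s (ltac:(by rewrite s0 stau)).
  move/le_trans; apply.
  have : a * s <= 1 by rewrite -atau ler_wpM2l // ltW.
  have : 0 < e / 2 by lra.
  nra.
move=> eps eps0.
pose b s := eps * (1 + a * s).
pose S := [set sg | 0 <= sg <= tau /\ forall s, 0 <= s <= sg -> D (t0 + s) <= b s].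
have S0 : S 0.
  split; first by rewrite lexx ltW.
  move=> s; rewrite -eq_le => /eqP <-; rewrite addr0 Dt0 /b mulr0 addr0 mulr1 ltW //.
have hsS : has_sup S.
  split; first by exists 0.
  by exists tau => x [/andP[_ ?] _].
set sg := sup S.
have sgub := sup_upper_bound hsS.
have sg0 : 0 <= sg by apply: sgub.
have sgtau : sg <= tau.
  apply: sup_le_ub; first by exists 0.
  by move=> x [/andP[_ ?] _].
have C1 : forall s, 0 <= s < sg -> D (t0 + s) <= b s.
  move=> s /andP[s0 ssg].
  have gt : 0 < sg - s by rewrite subr_gt0.
  have [e [/andP[e0 etau] He] lte] := sup_adherent gt hsS.
  apply: He; rewrite s0 /=.
  by move: lte; rewrite opprB addrCA subrr addr0 => /ltW.
have C2 : D (t0 + sg) <= b sg.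
  have [->|sgpos] := eqVneq sg 0; first by rewrite addr0 Dt0 /b mulr0 addr0 mulr1 ltW.
  have {}sgpos : 0 < sg by rewrite lt_def sgpos sg0.
  have [del del0 Hdel] := est (t0 + sg) eps eps0.
  pose h := Num.min (del / 2) (Num.min sg (C + 1)^-1).
  have h0 : 0 < h.
    rewrite /h !lt_min divr_gt0 //= sgpos /= invr_gt0; lra.
  have hdel : h < del.
    by rewrite /h gt_min; apply/orP; left; lra.
  have hsg : h <= sg by rewrite /h !ge_min lexx orbT.
  have hC : h * C < 1.
    have : h <= (C + 1)^-1 by rewrite /h !ge_min lexx !orbT.
    have : (C + 1)^-1 * (C + 1) = 1 by rewrite mulVf //; lra.
    nra.
  have := Hdel (- h) (ltac:(by rewrite oppr_eq0 gt_eqF)) (ltac:(by rewrite normrN gtr0_norm)).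
  rewrite normrN (gtr0_norm h0) => Hh.
  have Dm : D (t0 + sg + - h) <= b (sg - h).
    rewrite -addrA; have [->|hlt] := eqVneq h sg.
      by rewrite subrr addr0 Dt0 /b mulr0 addr0 mulr1 ltW.
    by apply: C1; rewrite subr_ge0 hsg /= ltrBlDr ltrDl.
  rewrite leNgt; apply/negP => Hgt.
  move: Hh Dm; rewrite /b => Hh Dm.
  move: Hh; rewrite ler_norml => /andP[X _]; rewrite /b in Hgt.
  set Ds := D (t0 + sg) in Hgt X.
  have : a * sg <= 1 by rewrite -atau ler_wpM2l // ltW.
  rewrite /a in Hgt Dm * => asg.
  have Ds0 : 0 <= Ds by apply: D0.
  have P1 : 0 < (Ds - eps * (1 + (2 * C + 2) * sg)) * (1 - h * C).
    by apply: mulr_gt0; lra.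
  have P2 : 0 <= h * eps * C * (1 - (2 * C + 2) * sg).
    by apply: mulr_ge0; [apply: mulr_ge0; [apply: mulr_ge0; lra|lra]|lra].
  have P3 : 0 < h * eps by apply: mulr_gt0; lra.
  nra.
have sgE : sg = tau.
  apply/eqP; rewrite eq_le sgtau /=; rewrite leNgt; apply/negP => sglt.
  have [del del0 Hdel] := est (t0 + sg) eps eps0.
  pose h := Num.min (del / 2) (tau - sg).
  have h0 : 0 < h by rewrite /h lt_min divr_gt0 //= subr_gt0.
  have : S (sg + h).
    split.
      have : h <= tau - sg by rewrite /h ge_min lexx orbT.
      move=> ?; apply/andP; split; lra.
    move=> s /andP[s0 ssh].
    have [ssg|sgs] := leP s sg.
      have [->|sne] := eqVneq s sg; first exact: C2.
      by apply: C1; rewrite s0 lt_neqAle sne ssg.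
    have k0 : s - sg != 0 by rewrite subr_eq0 gt_eqF.
    have kdel : `|s - sg| < del.
      rewrite gtr0_norm ?subr_gt0 //.
      apply: (le_lt_trans (y := h)); first by rewrite lerBlDl.
      by rewrite /h gt_min; apply/orP; left; lra.
    have := Hdel _ k0 kdel.
    have ks : 0 < s - sg by rewrite subr_gt0.
    have E : t0 + sg + (s - sg) = t0 + s by lra.
    rewrite (gtr0_norm ks) E => Hk.
    move: Hk; rewrite ler_norml => /andP[_ X].
    have Ds0 : 0 <= D (t0 + sg) by apply: D0.
    move: C2 X; rewrite /b => C2' X.
    have : a * sg <= 1 by rewrite -atau ler_wpM2l // ltW.
    move: sgs; rewrite /a in C2' X * => sgs asg.
    have P1 : 0 <= (s - sg) * C * (eps * (1 + (2 * C + 2) * sg) - D (t0 + sg)).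
      by apply: mulr_ge0; [apply: mulr_ge0; lra|lra].
    have P2 : 0 <= (s - sg) * eps * C * (1 - (2 * C + 2) * sg).
      by apply: mulr_ge0; [apply: mulr_ge0; [apply: mulr_ge0; lra|lra]|lra].
    have P3 : 0 <= (s - sg) * eps by apply: mulr_ge0; lra.
    nra.
  move/sgub; apply/negP; rewrite -ltNge ltrDl //.
move=> s /andP[s0 stau].
have [ssg|sgs] := leP s sg.
  have [->|sne] := eqVneq s sg; first exact: C2.
  by apply: C1; rewrite s0 lt_neqAle sne ssg.
by move: sgs; rewrite sgE => /(le_lt_trans stau); rewrite ltxx.
Qed.

Lemma gron_fwd (D : R -> R) C : 0 <= C -> (forall t, 0 <= D t) -> loc_est D C ->
  D 0 = 0 -> forall t, 0 <= t -> D t = 0.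
Proof.
move=> C0 D0 est Dz.
set tau := (2 * C + 2)^-1.
have tau0 : 0 < tau by rewrite /tau invr_gt0; lra.
have Hn : forall n : nat, forall s, 0 <= s <= n%:R * tau -> D s = 0.
  elim=> [|n IH] s /andP[s0 sn].
    by have -> : s = 0 by move: sn; rewrite mul0r => sn; apply/eqP; rewrite eq_le sn s0.
  have [sle|slt] := leP s (n%:R * tau); first by apply: IH; rewrite s0 sle.
  have -> : s = n%:R * tau + (s - n%:R * tau) by rewrite addrC subrK.
  apply: (gron_step C0 D0 est); first by apply: IH; rewrite lexx mulr_ge0 // ltW.
  move: sn; rewrite -natr1 mulrDl mul1r => sn.
  rewrite -/tau; apply/andP; split; lra.
move=> t t0.
apply: (Hn (Num.truncn (t / tau)).+1).
rewrite t0 /=.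
have := truncnS_gt (t / tau).
move/ltW; rewrite ler_pdivrMr // => H.
Qed.

Lemma gron (D : R -> R) C : 0 <= C -> (forall t, 0 <= D t) -> loc_est D C ->
  D 0 = 0 -> forall t, D t = 0.
Proof.
move=> C0 D0 est Dz t.
have [t0|t0] := leP 0 t; first exact: (gron_fwd C0 D0 est Dz).
have -> : t = - (- t) by rewrite opprK.
apply: (gron_fwd (D := fun t => D (- t)) C0) => //; last first.
- by rewrite oppr_ge0 ltW.
- by rewrite oppr0.
move=> s eta eta0.
have [del del0 Hd] := est (- s) eta eta0.
exists del => // h h0 hd.
rewrite opprD -(normrN h); apply: Hd; by rewrite ?oppr_eq0 ?normrN.
Qed.

Lemma near_del (Q : R -> Prop) : (\forall h \near (0:R)^', h != 0 -> Q h) ->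
  exists2 del : R, 0 < del & forall h, h != 0 -> `|h| < del -> Q h.
Proof.
move=> /nbhs_ballP[del /= del0 Hd]; exists del => // h h0 hd.
by apply: Hd => //; rewrite /ball /= sub0r normrN.
Qed.

End Gron.

Lemma lip_cont {R : realType} (F : R -> R) K :
  (forall a b, `|F a - F b| <= K * `|a - b|) -> continuous F.
Proof.
move=> HF x; apply/cvgrPdist_lt => e e0.
have K1 : 0 < `|K| + 1 by rewrite ltr_pwDr.
near=> y.
apply: (le_lt_trans (HF x y)).
have : `|x - y| < e / (`|K| + 1).
  by near: y; apply: cvgr_dist_lt; [exact: cvg_id|exact: divr_gt0].
move=> H.
apply: (le_lt_trans (ler_wpM2r (normr_ge0 _) (ler_norm K))).
apply: (le_lt_trans (y := `|K| * (e / (`|K| + 1)))).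
  by rewrite ler_wpM2l // ltW.
rewrite mulrA ltr_pdivrMr //; have := normr_ge0 K; nra.
Unshelve. all: end_near.
Qed.

Section M.
Context (R : realType) (d : measure_display) (T : measurableType d)
  (P : probability T R).
Local Notation int A f := (P.-integrable A (EFin \o f)).

Lemma iC A (mA : measurable A) (c : R) : int A (fun _ => c).
Proof. exact: finite_measure_integrable_cst. Qed.

Lemma iD A (mA : measurable A) (f g : T -> R) : int A f -> int A g ->
  int A (fun x => f x + g x).
Proof.
move=> ff gg; apply: eq_integrable (integrableD mA ff gg) => //= x _.
Qed.

Lemma iZ A (mA : measurable A) r (f : T -> R) : int A f ->
  int A (fun x => r * f x).
Proof.
move=> ff; apply: eq_integrable (integrableZl mA r ff) => //= x _.
Qed.

Lemma iZr A (mA : measurable A) r (f : T -> R) : int A f ->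
  int A (fun x => f x * r).
Proof.
move=> ff; apply: eq_integrable (iZ mA r ff) => //= x _.
by rewrite mulrC.
Qed.

Lemma iN A (mA : measurable A) (f : T -> R) : int A f -> int A (fun x => - f x).
Proof.
move=> ff; apply: eq_integrable (iZ mA (-1) ff) => //= x _.
by rewrite mulN1r.
Qed.

Lemma iB A (mA : measurable A) (f g : T -> R) : int A f -> int A g ->
  int A (fun x => f x - g x).
Proof. by move=> ff gg; apply: iD => //; apply: iN. Qed.

Lemma iA A (mA : measurable A) (f : T -> R) : int A f -> int A (fun x => `|f x|).
Proof. exact: integrable_norm. Qed.

Lemma iF A (mA : measurable A) (F : R -> R) K (f : T -> R) :
  (forall a b, `|F a - F b| <= K * `|a - b|) -> int A f -> int A (fun x => F (f x)).
Proof.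
move=> HF ff.
have mf : measurable_fun A f by apply/measurable_EFinP; exact: (measurable_int P ff).
have mFf : measurable_fun A (fun x => F (f x)).
  exact: measurableT_comp (continuous_measurable_fun (lip_cont HF)) mf.
apply: (le_integrable mA (g := EFin \o (fun x => `|F 0| + `|K| * `|f x|))).
- exact/measurable_EFinP.
- move=> x Ax /=; rewrite lee_fin.
  rewrite [X in _ <= X]ger0_norm ?addr_ge0 ?mulr_ge0 //.
  have := HF (f x) 0; rewrite subr0 => H.
  have H2 : `|F (f x)| <= `|F 0| + `|F (f x) - F 0|.
    by rewrite -lerBlDl; apply: (le_trans (lerB_dist _ _)).
  apply: (le_trans H2); rewrite lerD2l; apply: (le_trans H).
  by rewrite ler_wpM2r // ler_norm.
- by apply: iD => //; [apply: iC|apply: iZ => //; apply: iA].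
Qed.

Lemma iMF A (mA : measurable A) (F : R -> R) K (om v : T -> R) :
  (forall a b, `|F a - F b| <= K * `|a - b|) -> measurable_fun A om ->
  (forall y, `|om y| <= 1) -> int A v -> int A (fun x => om x * F (v x)).
Proof.
move=> HF mom om1 iv.
have iFv := iF mA HF iv.
have mFv : measurable_fun A (fun x => F (v x)).
  by apply/measurable_EFinP; exact: (measurable_int P iFv).
apply: (le_integrable mA (g := EFin \o (fun x => F (v x)))).
- by apply/measurable_EFinP; apply: measurable_funM.
- move=> x Ax /=; rewrite lee_fin normrM.
  by rewrite -[X in _ <= X]mul1r ler_wpM2r.
- exact: iFv.
Qed.

Lemma int_sub_le A (f : T -> \bar R) : (forall x, (0 <= f x)%E) ->
  (\int[P]_(x in A) f x <= \int[P]_(x in setT) f x)%E.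
Proof.
move=> f0; rewrite ge0_integralE // ge0_integralTE //.
apply: ereal_sup_le => _ [h hf <-]; exists h => //= x.
apply: (le_trans (hf x)); rewrite patchE; case: ifP => // _.
Qed.

Definition mean A (v : T -> R) := Rintegral P A v / fine (P A).
Definition dev A (v : T -> R) := Rintegral P A (fun x => `|v x - mean A v|).

Lemma mean_mul A (v : T -> R) : 0 < fine (P A) -> mean A v * fine (P A) = Rintegral P A v.
Proof. by move=> pA; rewrite /mean divfK // gt_eqF. Qed.

Lemma dev_ge0 A v : 0 <= dev A v.
Proof. by apply: Rintegral_ge0 => x _. Qed.

Lemma dev_le_c A (mA : measurable A) (v : T -> R) c : 0 < fine (P A) -> int A v ->
  dev A v <= 2 * Rintegral P A (fun x => `|v x - c|).
Proof.
move=> pA iv.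
set m := mean A v.
have i1 : int A (fun x => `|v x - c|) by apply: iA => //; apply: iB => //; apply: iC.
have E1 : dev A v <= Rintegral P A (fun x => `|v x - c| + `|c - m|).
  apply: le_Rintegral => //.
  - by apply: iA => //; apply: iB => //; apply: iC.
  - by apply: iD => //; apply: iC.
  move=> x _; rewrite (_ : v x - m = (v x - c) + (c - m)); first exact: ler_normD.
  by rewrite addrA subrK.
rewrite RintegralD // ?Rintegral_cst // in E1; last by apply: iC.
have E2 : `|c - m| * fine (P A) <= Rintegral P A (fun x => `|v x - c|).
  have -> : `|c - m| * fine (P A) = `|Rintegral P A (fun x => c - v x)|.
    rewrite RintegralB //; last by apply: iC.
    by rewrite Rintegral_cst // -(mean_mul v pA) -mulrBl normrM (gtr0_norm pA).
  apply: (le_trans (le_normr_Rintegral _ _)) => //; first by apply: iB => //; apply: iC.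
  by rewrite le_eqVlt; apply/orP; left; apply/eqP; apply: eq_Rintegral => x _; rewrite distrC.
lra.
Qed.

Lemma key A (mA : measurable A) (F : R -> R) K (v w : T -> R) h :
  0 < fine (P A) -> 0 <= K -> (forall a b, `|F a - F b| <= K * `|a - b|) ->
  h != 0 -> int A v -> int A w ->
  `|dev A w - dev A v| <= `|h| * (2 * K * dev A v +
     2 * Rintegral P A (fun x => `|(w x - v x) / h - F (v x)|)).
Proof.
move=> pA K0 HF h0 iv iw.
set ea := fun x => (w x - v x) / h - F (v x).
set phi := fun x => F (v x).
have iphi : int A phi by apply: (iF mA HF).
have iea : int A ea by apply: iB => //; apply: iZr => //; apply: iB.
set mv := mean A v. set mw := mean A w. set mphi := mean A phi. set me := mean A ea.
have wE : forall x, w x = v x + h * (phi x + ea x).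
  move=> x; rewrite /ea /phi. field. done.
have mwE : mw = mv + h * (mphi + me).
  rewrite /mw /mean; under eq_Rintegral => x _ do rewrite wE.
  rewrite RintegralD //; last by apply: iZ => //; apply: iD.
  rewrite RintegralZl //; last by apply: iD.
  rewrite RintegralD //.
  rewrite /mv /mphi /me /mean.
  field; rewrite gt_eqF //.
have pt : forall x, `| `|w x - mw| - `|v x - mv| | <=
    `|h| * (`|phi x - mphi| + `|ea x| + `|me|).
  move=> x.
  apply: (le_trans (ler_dist_dist _ _)).
  have -> : w x - mw - (v x - mv) = h * ((phi x - mphi) + (ea x - me)).
    by rewrite wE mwE; ring.
  rewrite normrM ler_wpM2l //.
  apply: (le_trans (ler_normD _ _)).
  have := ler_normB (ea x) me; lra.
have idw : int A (fun x => `|w x - mw|) by apply: iA => //; apply: iB => //; apply: iC.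
have idv : int A (fun x => `|v x - mv|) by apply: iA => //; apply: iB => //; apply: iC.
have idphi : int A (fun x => `|phi x - mphi|) by apply: iA => //; apply: iB => //; apply: iC.
have iaea : int A (fun x => `|ea x|) by apply: iA.
have S1 : `|dev A w - dev A v| <= Rintegral P A
    (fun x => `|h| * (`|phi x - mphi| + `|ea x| + `|me|)).
  rewrite /dev -/mw -/mv -RintegralB //.
  apply: le_trans (le_normr_Rintegral _ _) _ => //; first by apply: iB.
  apply: le_Rintegral => //.
  - by apply: iA => //; apply: iB.
  - by apply: iZ => //; apply: iD => //; [apply: iD|apply: iC].
rewrite RintegralZl // in S1; last by apply: iD => //; [apply: iD|apply: iC].
rewrite RintegralD // in S1; [|by apply: iD|by apply: iC].
rewrite RintegralD // Rintegral_cst // in S1.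
have S2 : dev A phi <= 2 * K * dev A v.
  apply: (le_trans (dev_le_c mA (F mv) pA iphi)).
  rewrite -mulrA ler_wpM2l //.
  rewrite /dev -/mv -RintegralZl //.
  apply: le_Rintegral => //.
  - by apply: iA => //; apply: iB => //; apply: iC.
  - by apply: iZ.
  by move=> x _; apply: HF.
have S3 : `|me| * fine (P A) <= Rintegral P A (fun x => `|ea x|).
  have -> : `|me| * fine (P A) = `|Rintegral P A ea|.
    by rewrite -(mean_mul ea pA) normrM (gtr0_norm pA).
  exact: le_normr_Rintegral.
apply: (le_trans S1); apply: ler_wpM2l => //.
rewrite -/(dev A phi) in S1 *.
lra.
Qed.

End M.

Lemma lip_abs {R : realType} (f : R -> R -> R) : lipschitz2 f ->
  exists2 K : R, 0 <= K & forall a b a' b',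
    `|f a b - f a' b'| <= K * (`|a - a'| + `|b - b'|).
Proof.
move=> [L HL]; exists `|L| => // a b a' b'.
apply: (le_trans (HL a b a' b')); apply: ler_wpM2r; last exact: ler_norm.
by apply: addr_ge0.
Qed.

Unset Implicit Arguments.

Theorem theorem4p3 (R : realType) (d : measure_display) (T : measurableType d)
  (P : probability T R) (W : T * T -> R) (f g : R -> R -> R) (A : set T) :
  lipschitz2 f -> lipschitz2 g -> is_graphon W ->
  measurable A -> (0 < P A)%E -> twins P W A ->
  dyn_invariant P W f g (cluster_subspace P A).
Proof.
move=> /lip_abs[Kf Kf0 Hf] /lip_abs[Kg Kg0 Hg] [mW [_ W01]] mA PA0 tw.
move=> u [iu conv] [_ [c Hc]].
have pA : 0 < fine (P A).
  apply: fine_gt0; rewrite PA0 /=.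
  by apply: (le_lt_trans (probability_le1 P mA)); rewrite ltry.
have [x0 Ax0] : exists x, A x.
  apply: contrapT => /forallNP H.
  have A0 : A = set0 by apply/seteqP; split => x // /H.
  by move: PA0; rewrite A0 measure0 ltxx.
have iuA : forall t, P.-integrable A (EFin \o u t).
  by move=> t; apply: (integrableS measurableT mA) => //.
have mWx : forall x, measurable_fun setT (fun y => W (x, y)).
  by move=> x; apply: measurableT_comp mW (pair1_measurable x).
have W1 : forall z, `|W z| <= 1.
  by move=> z; have /andP[? ?] := W01 z; rewrite ger0_norm.
have Hga : forall a z z', `|g a z - g a z'| <= Kg * `|z - z'|.
  by move=> a z z'; have := Hg a z a z'; rewrite subrr normr0 add0r.
have iW : forall t x a, P.-integrable setT
    (EFin \o (fun y => W (x, y) * g a (u t y))).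
  by move=> t x a; apply: (iMF measurableT (Hga a)) => //.
pose I t a := Rintegral P setT (fun y => W (x0, y) * g a (u t y)).
pose F t a := f a (I t a).
have Ilip : forall t a b, `|I t a - I t b| <= Kg * `|a - b|.
  move=> t a b; rewrite /I -RintegralB //.
  apply: (le_trans (le_normr_Rintegral _ _)) => //; first by apply: iB.
  apply: (le_trans (y := Rintegral P setT (fun _ => Kg * `|a - b|))).
    apply: le_Rintegral => //; first by apply: iA => //; apply: iB.
      exact: iC.
    move=> y _; rewrite -mulrBr normrM.
    rewrite -[X in _ <= X]mul1r; apply: ler_pM => //.
    by have := Hg a (u t y) b (u t y); rewrite subrr normr0 addr0.
  have P1 : fine (P setT) = 1 by rewrite probability_setT.
  by rewrite Rintegral_cst // P1 mulr1.
set K := Kf * (1 + Kg).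
have K0 : 0 <= K by rewrite /K mulr_ge0 // addr_ge0.
have Flip : forall t a b, `|F t a - F t b| <= K * `|a - b|.
  move=> t a b; apply: (le_trans (Hf _ _ _ _)).
  rewrite /K -mulrA ler_wpM2l // mulrDl mul1r lerD2l.
  exact: Ilip.
have rhsE : forall t x, A x -> graphon_rhs P W f g (u t) x = F t (u t x).
  move=> t x Ax; rewrite /graphon_rhs /F /I; congr (f _ _).
  rewrite /Rintegral; congr fine.
  apply: ae_eq_integral => //.
  - exact: measurable_int (iW t x (u t x)).
  - exact: measurable_int (iW t x0 (u t x)).
  - have := tw x x0 Ax Ax0; apply: filterS => y Hy _; by rewrite /= Hy.
pose D t := dev P A (u t).
have D00 : D 0 = 0.
  apply/eqP; rewrite eq_le dev_ge0 andbT.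
  apply: (le_trans (dev_le_c mA c pA (iuA 0))).
  suff -> : Rintegral P A (fun x => `|u 0 x - c|) = 0 by rewrite mulr0.
  rewrite /Rintegral (ae_eq_integral (cst 0%E)) //= ?integral0 //.
  - by apply: (measurable_int P); apply: iA => //; apply: iB => //; apply: iC.
  - apply: filterS Hc => x H Ax; by rewrite /= H // subrr normr0.
have est : loc_est D (2 * K).
  move=> t eta eta0.
  have /fine_cvgP[Hfin Hcv] := conv t.
  have eta2 : 0 < eta / 2 by apply: divr_gt0.
  have Hlt := cvgr_dist_lt _ _ Hcv _ eta2.
  apply: near_del.
  apply: (filterS2 _ _ Hfin (Hlt _)) => h hfin hlt h0.
  apply: (le_trans (key mA pA K0 (Flip t) h0 (iuA t) (iuA (t + h)))).
  rewrite ler_wpM2l // lerD2l.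
  suff Hle : Rintegral P A (fun x => `|(u (t + h) x - u t x) / h - F t (u t x)|) <= eta / 2.
    lra.
  have iea : P.-integrable A
      (EFin \o (fun x => `|(u (t + h) x - u t x) / h - F t (u t x)|)).
    apply: iA => //; apply: iB => //; first by apply: iZr => //; apply: iB.
    exact: (iF mA (Flip t)).
  have finA := integrable_fin_num mA iea.
  have le1 : (\int[P]_(x in A) (`|(u (t + h) x - u t x) / h - F t (u t x)|)%:E <=
      \int[P]_x (`|(u (t + h) x - u t x) / h - graphon_rhs P W f g (u t) x|)%:E)%E.
    rewrite (eq_integral (fun x => (`|(u (t + h) x - u t x) / h - graphon_rhs P W f g (u t) x|)%:E)); last first.
      by move=> x /set_mem Ax; rewrite rhsE.
    by apply: int_sub_le => x; rewrite lee_fin.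
  rewrite /Rintegral.
  apply: (le_trans (fine_le finA hfin le1)).
  move: hlt; rewrite /= sub0r normrN => hlt.
  exact: (le_trans (ler_norm _) (ltW hlt)).
have K20 : 0 <= 2 * K by rewrite mulr_ge0.
have Dz := gron K20 (fun t => dev_ge0 P A (u t)) est D00.
move=> t; split; first exact: iu.
exists (mean P A (u t)).
set m := mean P A (u t).
have iabs : P.-integrable A (EFin \o (fun x => `|u t x - m|)).
  by apply: iA => //; apply: iB => //; apply: iC.
have fin := integrable_fin_num mA iabs.
have H0 : (\int[P]_(x in A) `|(u t x - m)%:E| = 0)%E.
  have := Dz t; rewrite /D /dev /Rintegral -/m => H.
  by rewrite -(fineK fin) H.
have mf : measurable_fun A (EFin \o (fun x => u t x - m)).
  by apply: (measurable_int P); apply: iB => //; apply: iC.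
have := (ae_eq_integral_abs P mA mf).1 H0.
apply: filterS => x Hx Ax.
have := Hx Ax; rewrite /= => -[] /eqP; rewrite subr_eq0 => /eqP.
done.
Qed.
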